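(* Let $R_1,R_2$ be commutative rings with nonzero identity, $I_1$ an ideal of $R_1$, $I_2$ an ideal of $R_2$, $R=R_1\times R_2$ and $I=I_1\times I_2$. (a) Let $x\in R_1$ and $y_1,y_2\in R_2$. Then $(x,y_1)$ is adjacent to $(x,y_2)$ in $\Gamma''_I(R)$ if and only if $y_1$ is adjacent to $y_2$ in $\Gamma''_{I_2}(R_2)$. (b) Let $x_1,x_2\in R_1$ and $y\in R_2$. Then $(x_1,y)$ is adjacent to $(x_2,y)$ in $\Gamma''_I(R)$ if and only if $x_1$ is adjacent to $x_2$ in $\Gamma''_{I_1}(R_1)$.
   Context: $R_1\times R_2$ has componentwise operations. For a commutative ring $S$ and an ideal $J$ of $S$, $\Gamma''_J(S)$ is the simple undirected graph whose vertex set is $\{x\in S\setminus J : xS+J\neq S\}$, with distinct vertices $x,y$ adjacent if and only if $x\notin yS+J$ and $y\notin xS+J$. *)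

(* Defs.v *)
From mathcomp Require Import all_boot all_algebra.
Set Implicit Arguments. Unset Strict Implicit. Unset Printing Implicit Defensive.
Import GRing.Theory.
Local Open Scope ring_scope.

Definition is_ideal (S : comNzRingType) (J : S -> Prop) : Prop :=
  [/\ J 0, (forall a b, J a -> J b -> J (a - b)) & (forall r a, J a -> J (r * a))].

Definition principal_plus (S : comNzRingType) (J : S -> Prop) (x : S) : S -> Prop :=
  fun z => exists s j, J j /\ z = x * s + j.

(* Vertex set of Gamma''_J(S): x \notin J and xS + J <> S. *)
Definition gvertex (S : comNzRingType) (J : S -> Prop) (x : S) : Prop :=
  ~ J x /\ ~ (forall z, principal_plus J x z).

Definition gadj (S : comNzRingType) (J : S -> Prop) (x y : S) : Prop :=
  [/\ gvertex J x, gvertex J y, x <> y,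
      ~ principal_plus J y x & ~ principal_plus J x y].

Definition prod_ideal (R1 R2 : comNzRingType) (I1 : R1 -> Prop) (I2 : R2 -> Prop)
  : (R1 * R2)%type -> Prop := fun p => I1 p.1 /\ I2 p.2.

(* Main.v *)
Require Import Defs.
From mathcomp Require Import all_boot all_algebra.
Local Open Scope ring_scope.
Import GRing.Theory.
Set Implicit Arguments.

Lemma gadj_iff (S : comNzRingType) (J : S -> Prop) (J0 : J 0) (a b : S) :
  gadj J a b <-> [/\ a <> b, ~ principal_plus J b a & ~ principal_plus J a b].
Proof.
split; first by case.
case=> ab nba nab; split=> //.
- split.
  + move=> Ja; apply: nba; exists 0, a; split=> //; by rewrite mulr0 add0r.
  + move=> H; apply: nab; exact: H.
- split.
  + move=> Jb; apply: nab; exists 0, b; split=> //; by rewrite mulr0 add0r.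
  + move=> H; apply: nba; exact: H.
Qed.

Lemma pp_self (S : comNzRingType) (J : S -> Prop) (J0 : J 0) (a : S) :
  principal_plus J a a.
Proof. exists 1, 0; split=> //; by rewrite mulr1 addr0. Qed.

Lemma pp_prod (R1 R2 : comNzRingType) (I1 : R1 -> Prop) (I2 : R2 -> Prop)
  (a c : R1) (b d : R2) :
  principal_plus (prod_ideal I1 I2) ((a, b) : (R1 * R2)%type) (c, d) <->
  principal_plus I1 a c /\ principal_plus I2 b d.
Proof.
split.
- case=> s [j [[J1 J2] E]].
  have E1 : c = a * s.1 + j.1 by rewrite -[c]/((c, d).1) E.
  have E2 : d = b * s.2 + j.2 by rewrite -[d]/((c, d).2) E.
  split; [exists s.1, j.1 | exists s.2, j.2]; by [].
- case=> [[s1 [j1 [J1 E1]]] [s2 [j2 [J2 E2]]]].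
  exists (s1, s2), (j1, j2); split; first by [].
  by rewrite E1 E2.
Qed.

Theorem lemma2p3 (R1 R2 : comNzRingType) (I1 : R1 -> Prop) (I2 : R2 -> Prop)
  (hI1 : is_ideal I1) (hI2 : is_ideal I2) :
  (forall (x : R1) (y1 y2 : R2),
     gadj (prod_ideal I1 I2) ((x, y1) : (R1 * R2)%type) (x, y2) <-> gadj I2 y1 y2) /\
  (forall (x1 x2 : R1) (y : R2),
     gadj (prod_ideal I1 I2) ((x1, y) : (R1 * R2)%type) (x2, y) <-> gadj I1 x1 x2).
Proof.
case: hI1 => J10 _ _; case: hI2 => J20 _ _.
have J0 : prod_ideal I1 I2 0 by split.
split=> [x y1 y2 | x1 x2 y].
- apply: (iff_trans (@gadj_iff _ _ J0 _ _)).
  apply: (iff_trans _ (iff_sym (@gadj_iff _ _ J20 _ _))).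
  have Hx := @pp_self _ _ J10 x.
  split; case=> H1 H2 H3; split.
  + by move=> E; apply: H1; rewrite E.
  + by move=> H; apply: H2; apply/pp_prod.
  + by move=> H; apply: H3; apply/pp_prod.
  + by case=> E; apply: H1.
  + by move/pp_prod=> [_ H]; apply: H2.
  + by move/pp_prod=> [_ H]; apply: H3.
- apply: (iff_trans (@gadj_iff _ _ J0 _ _)).
  apply: (iff_trans _ (iff_sym (@gadj_iff _ _ J10 _ _))).
  have Hy := @pp_self _ _ J20 y.
  split; case=> H1 H2 H3; split.
  + by move=> E; apply: H1; rewrite E.
  + by move=> H; apply: H2; apply/pp_prod.
  + by move=> H; apply: H3; apply/pp_prod.
  + by case=> E; apply: H1.
  + by move/pp_prod=> [H _]; apply: H2.
  + by move/pp_prod=> [H _]; apply: H3.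
Qed.
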